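(* Let $G=(V,E)$ be a connected graph with $n$ vertices, $\tau$ a set of types with $|\tau|>1$, $f:\tau\to\mathbb{Q}_{\ge1}$ a fitness function, and $D\in\mathcal D(G,\tau)$. Let $f^*=\max\{f(j): j\in\tau\setminus\tau^+(f)\}$. Then for every $\alpha\in\tau^+(f)$, $\mathbb{E}(A_\alpha(G,\tau,f,D))\le(|\tau^+(f)|-1)n^6+\frac{f(\alpha)}{f(\alpha)-f^*}(n+1)n^3$.
   Context: $\tau^+(f)=\{i\in\tau:f(i)=\max_{j\in\tau}f(j)\}$. For $G=(V,E)$, $N(v)$ is the neighbourhood of $v$. $\Omega$ is the set of states $V\to\tau$; for $S\in\Omega$, $S|_{v\to w}$ equals $S$ except $w$ gets type $S(v)$. The Moran process $M(G,\tau,f,D)$ is the Markov chain on $\Omega$ with $M_0$ drawn from $D$ and, given $M_t$, a vertex $v$ chosen with probability $f(M_t(v))/\sum_uf(M_t(u))$, then $w\in N(v)$ uniformly, and $M_{t+1}=M_t|_{v\to w}$. $V_j(t)=\{v:M_t(v)=j\}$, and $A_j(G,\tau,f,D)=\min\{t\in\mathbb{Z}_{\ge0}:V_j(t)=V\text{ or }V_j(t)=\emptyset\}$. With $k=|\tau|$, $V[k]$ is the set of $k$-tuples of distinct vertices, $\tau[k]$ the set of $k$-tuples of distinct types, $\Omega(\mathbf u,\boldsymbol\gamma)$ the set of states mapping the $i$-th entry of $\mathbf u$ to the $i$-th entry of $\boldsymbol\gamma$ for all $i$. $\mathcal D(G,\tau)$ is the set of distributions $D$ on $\Omega$ for which there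 are distributions $D_{\mathbf u,\boldsymbol\gamma}$ on $\Omega(\mathbf u,\boldsymbol\gamma)$ with $\Pr_D(S)=\frac{1}{|V[k]\times\tau[k]|}\sum_{(\mathbf u,\boldsymbol\gamma)\in V[k]\times\tau[k]}\Pr_{D_{\mathbf u,\boldsymbol\gamma}}(S)$ for all $S$. *)

(* Defs.v *)
From HB Require Import structures.
From mathcomp Require Import all_boot all_order all_algebra.
From mathcomp Require Import reals ereal sequences.
Set Implicit Arguments. Unset Strict Implicit. Unset Printing Implicit Defensive.
Import Order.TTheory GRing.Theory Num.Theory.
Local Open Scope ring_scope.

Section Moran.
Variables (R : realType) (V T : finType).

Definition state := {ffun V -> T}.

Definition nbhd (e : rel V) (v : V) : {set V} := [set w | e v w].

Definition update (S : state) (v w : V) : state :=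
  [ffun x => if x == w then S v else S x].

Definition tauplus (f : T -> rat) : {set T} :=
  [set i | [forall j, f j <= f i]].

(* f^* = max of f over tau \ tau^+(f) (values are >= 1, so the bottom 0 is harmless
   as soon as tau \ tau^+(f) is nonempty) *)
Definition fstar (f : T -> rat) : rat :=
  \big[Num.max/0]_(j in ~: tauplus f) f j.

Definition total_fitness (f : T -> rat) (S : state) : R :=
  \sum_(u : V) ratr (f (S u)).

Definition moran_trans (e : rel V) (f : T -> rat) (S S' : state) : R :=
  \sum_(v : V) \sum_(w in nbhd e v)
     (ratr (f (S v)) / total_fitness f S) * (#|nbhd e v|%:R)^-1
       * ((update S v w == S')%:R).

Definition absorbed (j : T) (S : state) : bool :=
  [forall v, S v == j] || [forall v, S v != j].

(* mu t S = Pr(M_t = S and A_j > t)  (killed distribution) *)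
Fixpoint killed (e : rel V) (f : T -> rat) (D : state -> R) (j : T) (t : nat)
  (S : state) : R :=
  match t with
  | 0 => D S * (~~ absorbed j S)%:R
  | t'.+1 => \sum_(S0 : state) killed e f D j t' S0 * moran_trans e f S0 S
                * (~~ absorbed j S)%:R
  end.

Definition prob_A_gt (e : rel V) (f : T -> rat) (D : state -> R) (j : T) (t : nat) : R :=
  \sum_(S : state) killed e f D j t S.

(* E(A_j) = sum_{t >= 0} Pr(A_j > t), as an extended real (+oo if A_j is not a.s. finite
   or has infinite mean) *)
Definition expected_A (e : rel V) (f : T -> rat) (D : state -> R) (j : T) : \bar R :=
  (\sum_(0 <= t <oo) (prob_A_gt e f D j t)%:E)%E.

Definition is_distribution (D : state -> R) : Prop :=
  (forall S, 0 <= D S) /\ \sum_(S : state) D S = 1.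

Definition distinct_tuple (X : finType) (k : nat) (u : {ffun 'I_k -> X}) : bool :=
  injectiveb u.

Definition in_Omega (k : nat) (u : {ffun 'I_k -> V}) (g : {ffun 'I_k -> T}) (S : state) : bool :=
  [forall i, S (u i) == g i].

Definition in_Dcal (D : state -> R) : Prop :=
  exists Dug : {ffun 'I_#|T| -> V} -> {ffun 'I_#|T| -> T} -> state -> R,
    (forall u g, distinct_tuple u -> distinct_tuple g ->
       is_distribution (Dug u g) /\ (forall S, Dug u g S != 0 -> in_Omega u g S)) /\
    (forall S, D S =
       (#|[set u : {ffun 'I_#|T| -> V} | distinct_tuple u]|%:R
        * #|[set g : {ffun 'I_#|T| -> T} | distinct_tuple g]|%:R)^-1
       * \sum_(u : {ffun 'I_#|T| -> V} | distinct_tuple u)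
           \sum_(g : {ffun 'I_#|T| -> T} | distinct_tuple g) Dug u g S).

End Moran.

(* Main.v *)
Require Import Defs.
From HB Require Import structures.
From mathcomp Require Import all_boot all_order all_algebra.
From mathcomp Require Import reals ereal sequences.
From mathcomp Require Import ring lra.
Import Order.TTheory GRing.Theory Num.Theory.
Local Open Scope ring_scope.

Lemma series_le (R : realType) (u : nat -> R) (c : R) :
  (forall t, 0 <= u t) -> (forall n, \sum_(t < n) u t <= c) ->
  (\sum_(0 <= t <oo) (u t)%:E <= c%:E)%E.
Proof.
move=> u0 uc.
apply: ereal_normedtype.lime_le.
  by apply: is_cvg_nneseries => n _ _; rewrite lee_fin.
apply: nearW => n /=.
by rewrite sumEFin lee_fin big_mkord.
Qed.

Lemma drift (R : realType) (St : finType) (P : St -> St -> R) (abs : St -> bool)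
  (mu : nat -> St -> R) (Psi : St -> R) (M del : R) :
  (forall S S', 0 <= P S S') ->
  (forall S, ~~ abs S -> \sum_S' P S S' <= 1) ->
  (forall S, ~~ abs S -> Psi S + del <= \sum_S' P S S' * Psi S') ->
  (forall S, 0 <= Psi S <= M) -> 0 <= M -> 0 < del ->
  (forall S, 0 <= mu 0%N S) -> \sum_S mu 0%N S <= 1 ->
  (forall S, abs S -> mu 0%N S = 0) ->
  (forall t S', mu t.+1 S' = \sum_S mu t S * P S S' * (~~ abs S')%:R) ->
  forall n, \sum_(t < n) \sum_S mu t S <= M / del.
Proof.
move=> P0 P1 Pd Pb M0 d0 mu00 mu01 mu0a muS.
have mu_ge0 t S : 0 <= mu t S.
  elim: t S => [|t IH] S //; rewrite muS; apply: sumr_ge0 => S0 _.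
  by rewrite !mulr_ge0 ?ler0n.
have mu_abs t S : abs S -> mu t S = 0.
  case: t => [|t] aS; first exact: mu0a.
  by rewrite muS; apply: big1 => S0 _; rewrite aS mulr0.
pose a t := \sum_S mu t S * Psi S.
pose m t := \sum_S mu t S.
have step t : a t + del * m t + M * m t.+1 <= a t.+1 + M * m t.
  pose c S' := \sum_S mu t S * P S S'.
  have c0 S' : 0 <= c S' by apply: sumr_ge0 => S _; rewrite mulr_ge0.
  have h1 : a t + del * m t <= \sum_S' c S' * Psi S'.
    rewrite /c (eq_bigr (fun S' => \sum_S mu t S * (P S S' * Psi S'))); last first.
      by move=> S' _; rewrite mulr_suml; apply: eq_bigr => S _; rewrite mulrA.
    rewrite exchange_big /= /a /m mulr_sumr -big_split /=; apply: ler_sum => S _.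
    rewrite (mulrC del) -mulrDr -mulr_sumr.
    case aS: (abs S); first by rewrite mu_abs // !mul0r.
    by rewrite ler_wpM2l // Pd // aS.
  have h2 : \sum_S' c S' <= m t.
    rewrite /c exchange_big /m; apply: ler_sum => S _.
    rewrite -mulr_sumr; case aS: (abs S); first by rewrite mu_abs // mul0r.
    by rewrite ler_piMr // P1 // aS.
  have ha : a t.+1 = \sum_S' c S' * (~~ abs S')%:R * Psi S'.
    by apply: eq_bigr => S' _; congr (_ * _); rewrite muS /c mulr_suml.
  have hm : m t.+1 = \sum_S' c S' * (~~ abs S')%:R.
    by apply: eq_bigr => S' _; rewrite muS /c mulr_suml.
  have h3 : \sum_S' c S' * Psi S' <= a t.+1 + M * (\sum_S' c S' - m t.+1).
    rewrite ha hm -sumrB mulr_sumr -big_split /=; apply: ler_sum => S' _.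
    case: (abs S') => /=; rewrite ?mulr0 ?mulr1 ?mul0r ?add0r ?subr0 ?subrr ?mulr0 ?addr0 //.
    by rewrite mulrC ler_wpM2r //; case/andP: (Pb S').
  apply: (le_trans (lerD h1 (lexx _))).
  rewrite -lerBrDr -addrA -mulrBr.
  apply: (le_trans h3); rewrite lerD2l; apply: ler_wpM2l => //.
  by rewrite lerB.
have inv n : a 0%N - M * m 0%N + del * \sum_(t < n) m t <= a n - M * m n.
  elim: n => [|n IH]; first by rewrite big_ord0 mulr0 addr0.
  rewrite big_ord_recr /= mulrDr addrA.
  apply: (le_trans (lerD IH (lexx _))).
  have := step n; lra.
move=> n.
rewrite ler_pdivlMr // mulrC.
have an : a n <= M * m n.
  rewrite /a /m mulr_sumr; apply: ler_sum => S _.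
  by rewrite mulrC ler_wpM2r //; case/andP: (Pb S).
have a0 : 0 <= a 0%N by apply: sumr_ge0 => S _; rewrite mulr_ge0 //; case/andP: (Pb S).
have m0 : M * m 0%N <= M by rewrite ler_piMr.
move: an a0 m0 (inv n); rewrite /a /m; lra.
Qed.

Lemma boundary (V : finType) (e : rel V) (P : pred V) x y :
  connect e x y -> P x -> ~~ P y -> exists u w, [&& e u w, P u & ~~ P w].
Proof.
move/connectP=> [q]; elim: q x => [|z q IH] x /=.
  by move=> _ -> Py; rewrite Py.
case/andP=> exz pq yl Px nPy.
case Pz: (P z); first exact: IH pq yl Pz nPy.
by exists x, z; rewrite exz Px Pz.
Qed.

Lemma has_nb (V : finType) (e : rel V) x y : connect e x y -> x != y -> exists w, e x w.
Proof.
move/connectP=> [[|z q]] /=; first by move=> _ ->; rewrite eqxx.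
by case/andP=> exz _ _ _; exists z.
Qed.

Lemma nonabs (V T : finType) (j : T) (S : state V T) : ~~ absorbed j S ->
  (exists x, S x == j) /\ (exists y, S y != j).
Proof.
rewrite /absorbed negb_or => /andP[/forallPn[y Hy] /forallPn[x Hx]].
by split; [exists x; rewrite negbK in Hx | exists y].
Qed.

Lemma nonabs_deg (V T : finType) (e : rel V) (j : T) (S : state V T) :
  (forall u v : V, connect e u v) -> ~~ absorbed j S -> forall v, (0 < #|nbhd e v|)%N.
Proof.
move=> conn /nonabs[[x Hx] [y Hy]] v.
have [z vz] : exists z, v != z.
  case: (eqVneq v x) => [vx|]; last by exists x.
  exists y; apply/eqP => vy; move: Hy; rewrite -vy vx Hx.
  by [].
have [w evw] := @has_nb _ e v z (conn v z) vz.
by apply/card_gt0P; exists w; rewrite /nbhd inE.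
Qed.

Lemma nonabs_boundary (V T : finType) (e : rel V) (j : T) (S : state V T) :
  (forall u v : V, connect e u v) -> ~~ absorbed j S ->
  exists u w, [&& e u w, S u == j & S w != j].
Proof.
move=> conn /nonabs[[x Hx] [y Hy]].
exact: (@boundary V e (fun v => S v == j) x y (conn x y) Hx Hy).
Qed.

Section M.
Variables (R : realType) (V T : finType) (e : rel V) (f : T -> rat) (alpha : T).

Let deg v := #|nbhd e v|.
Let d v : R := (deg v)%:R^-1.
Let fr x : R := ratr (f x).
Let F (S : state V T) := total_fitness R f S.
Let a (S : state V T) v : R := (S v == alpha)%:R.
Let p (S : state V T) v := fr (S v) / F S * d v.

Lemma trans_expand S (Psi : state V T -> R) :
  \sum_S' moran_trans R e f S S' * Psi S' =
  \sum_v \sum_(w in nbhd e v) p S v * Psi (update S v w).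
Proof.
rewrite /moran_trans.
under eq_bigr do rewrite mulr_suml.
rewrite exchange_big; apply: eq_bigr => v _ /=.
under eq_bigr do rewrite mulr_suml.
rewrite exchange_big; apply: eq_bigr => w _ /=.
rewrite (bigD1 (update S v w)) //= eqxx mulr1 big1 ?addr0 //.
by move=> S' /negbTE; rewrite eq_sym => ->; rewrite mulr0 mul0r.
Qed.

Lemma d_le1 v : d v <= 1.
Proof.
rewrite /d; case: (deg v) => [|k]; first by rewrite invr0.
by rewrite invf_le1 // ?ler1n // ltr0n.
Qed.

Lemma d_ge0 v : 0 <= d v.
Proof. by rewrite /d invr_ge0 ler0n. Qed.

Lemma fr_ge1 (f_ge1 : forall i, 1 <= f i) x : 1 <= fr x.
Proof. by rewrite /fr -(rmorph1 (ratr : rat -> R)) ler_rat. Qed.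

Lemma F_ge (f_ge1 : forall i, 1 <= f i) S : #|V|%:R <= F S.
Proof.
rewrite /F /total_fitness -sum1_card natr_sum; apply: ler_sum => u _.
exact: fr_ge1.
Qed.

Lemma F_gt0 (f_ge1 : forall i, 1 <= f i) (v0 : V) S : 0 < F S.
Proof.
apply: (lt_le_trans _ (F_ge f_ge1 S)); rewrite ltr0n.
by apply/card_gt0P; exists v0.
Qed.

Lemma sum_p (f_ge1 : forall i, 1 <= f i) (v0 : V) S : (forall v, (0 < deg v)%N) ->
  \sum_v \sum_(w in nbhd e v) p S v = 1.
Proof.
move=> dpos.
have F0 := F_gt0 f_ge1 v0 S.
transitivity (\sum_v fr (S v) / F S).
  apply: eq_bigr => v _; rewrite sumr_const -mulr_natr -/(deg v) /p /d -!mulrA mulVf ?mulr1 //.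
  by rewrite pnatr_eq0 -lt0n dpos.
by rewrite -mulr_suml divff // gt_eqF.
Qed.

Let phi (S : state V T) := \sum_x a S x * d x.

Lemma phi_update S v w : phi (update S v w) = phi S + d w * (a S v - a S w).
Proof.
rewrite /phi (bigD1 w) //= [in RHS](bigD1 w) //=.
rewrite /a /update ffunE eqxx.
have -> : \sum_(i | i != w) ((([ffun x => if x == w then S v else S x] : state V T) i == alpha)%:R * d i)
   = \sum_(i | i != w) ((S i == alpha)%:R * d i) :> R.
  by apply: eq_bigr => x /negbTE xw; rewrite ffunE xw.
ring.
Qed.

Lemma swap_nb (e_sym : symmetric e) (G : V -> V -> R) :
  \sum_v \sum_(w in nbhd e v) G v w = \sum_v \sum_(w in nbhd e v) G w v.
Proof.
under eq_bigr do rewrite big_mkcond.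
under [RHS]eq_bigr do rewrite big_mkcond.
rewrite [RHS]exchange_big; apply: eq_bigr => v _; apply: eq_bigr => w _.
by rewrite /nbhd !inE e_sym.
Qed.

Let L S := \sum_v \sum_(w in nbhd e v) p S v * (d w * (a S v - a S w)).

Lemma L_eq (e_sym : symmetric e) S : L S =
  \sum_v \sum_(w in nbhd e v) (d v * d w / F S) * (a S v * (1 - a S w)) * (fr (S v) - fr (S w)).
Proof.
pose A v w := (d v * d w / F S) * fr (S v) * (a S v * (1 - a S w)).
pose B v w := (d v * d w / F S) * fr (S v) * (a S w * (1 - a S v)).
transitivity (\sum_v \sum_(w in nbhd e v) A v w - \sum_v \sum_(w in nbhd e v) B v w).
  rewrite -sumrB; apply: eq_bigr => v _; rewrite -sumrB; apply: eq_bigr => w _.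
  rewrite /A /B /p; ring.
rewrite (swap_nb e_sym B) -sumrB; apply: eq_bigr => v _; rewrite -sumrB; apply: eq_bigr => w _.
rewrite /A /B; ring.
Qed.

Lemma term_ge0 (amax : forall j, f j <= f alpha) S v w : 0 < F S ->
  0 <= (d v * d w / F S) * (a S v * (1 - a S w)) * (fr (S v) - fr (S w)).
Proof.
move=> F0; rewrite /a; case: eqP => [->|_]; last by rewrite !mul0r mulr0 mul0r.
rewrite mul1r; apply: mulr_ge0; first apply: mulr_ge0.
- by rewrite !mulr_ge0 ?d_ge0 // invr_ge0 ltW.
- by case: (_ == _); rewrite /= ?subr0 ?subrr.
- by rewrite subr_ge0 /fr ler_rat.
Qed.

Lemma L_ge0 (e_sym : symmetric e) (amax : forall j, f j <= f alpha) S : 0 < F S -> 0 <= L S.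
Proof.
move=> F0; rewrite L_eq //; apply: sumr_ge0 => v _; apply: sumr_ge0 => w _.
exact: term_ge0.
Qed.

Lemma L_lb (e_sym : symmetric e) (amax : forall j, f j <= f alpha) S u w0 :
  0 < F S -> e u w0 -> S u = alpha -> S w0 != alpha ->
  d u * d w0 / F S * (fr alpha - fr (S w0)) <= L S.
Proof.
move=> F0 euw Su Sw; rewrite L_eq // (bigD1 u) //= (bigD1 w0) /nbhd ?inE //=.
have h1 : 0 <= \sum_(i in [set w | e u w] | i != w0)
   d u * d i / F S * (a S u * (1 - a S i)) * (fr (S u) - fr (S i)).
  by apply: sumr_ge0 => w _; exact: term_ge0.
have h2 : 0 <= \sum_(i | i != u) \sum_(w in [set w | e i w])
   d i * d w / F S * (a S i * (1 - a S w)) * (fr (S i) - fr (S w)).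
  by apply: sumr_ge0 => v _; apply: sumr_ge0 => w _; exact: term_ge0.
move: h1 h2; rewrite /a Su eqxx (negbTE Sw) /= subr0 !mulr1; lra.
Qed.

Lemma drift_eq (f_ge1 : forall i, 1 <= f i) (v0 : V) S (Psi : state V T -> R) :
  (forall v, (0 < deg v)%N) ->
  \sum_S' moran_trans R e f S S' * Psi S' =
  Psi S + \sum_v \sum_(w in nbhd e v) p S v * (Psi (update S v w) - Psi S).
Proof.
move=> dpos; rewrite trans_expand.
have E : \sum_v \sum_(w in nbhd e v) p S v * Psi S = Psi S.
  by rewrite -[RHS]mul1r -(sum_p f_ge1 v0 S dpos) !mulr_suml; apply: eq_bigr => v _; rewrite mulr_suml.
rewrite -{1}E.
rewrite -big_split; apply: eq_bigr => v _ /=; rewrite -big_split; apply: eq_bigr => w _ /=.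
ring.
Qed.

Lemma drift_phi (f_ge1 : forall i, 1 <= f i) (v0 : V) S :
  (forall v, (0 < deg v)%N) ->
  \sum_S' moran_trans R e f S S' * phi S' = phi S + L S.
Proof.
move=> dpos; rewrite (drift_eq f_ge1 v0) //; congr (_ + _).
apply: eq_bigr => v _; apply: eq_bigr => w _; rewrite phi_update; congr (_ * _); ring.
Qed.

Lemma drift_phi2 (f_ge1 : forall i, 1 <= f i) (v0 : V) S :
  (forall v, (0 < deg v)%N) ->
  \sum_S' moran_trans R e f S S' * (phi S' ^+ 2) = phi S ^+ 2 +
   (2 * phi S * L S + \sum_v \sum_(w in nbhd e v) p S v * (d w * (a S v - a S w)) ^+ 2).
Proof.
move=> dpos; rewrite (drift_eq f_ge1 v0 S (fun S => phi S ^+ 2)) //; congr (_ + _).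
rewrite /L mulr_sumr -big_split; apply: eq_bigr => v _ /=.
rewrite mulr_sumr -big_split; apply: eq_bigr => w _ /=.
rewrite phi_update; ring.
Qed.

Lemma phi_ge0 S : 0 <= phi S.
Proof. by apply: sumr_ge0 => x _; rewrite mulr_ge0 ?d_ge0 ?ler0n. Qed.

Lemma phi_le S : phi S <= #|V|%:R.
Proof.
rewrite -sum1_card natr_sum; apply: ler_sum => x _.
rewrite /a; case: (_ == _); rewrite ?mul1r ?mul0r ?d_le1 //.
Qed.

Lemma p_ge0 (f_ge1 : forall i, 1 <= f i) S v : 0 < F S -> 0 <= p S v.
Proof.
move=> F0; have fr0 : 0 <= fr (S v) by apply: (le_trans ler01); exact: fr_ge1.
by rewrite /p mulr_ge0 ?d_ge0 // mulr_ge0 // invr_ge0 ltW.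
Qed.

Lemma Q_lb (f_ge1 : forall i, 1 <= f i) S u w0 :
  0 < F S -> e u w0 -> S u = alpha -> S w0 != alpha ->
  p S u * d w0 ^+ 2 <= \sum_v \sum_(w in nbhd e v) p S v * (d w * (a S v - a S w)) ^+ 2.
Proof.
move=> F0 euw Su Sw; rewrite (bigD1 u) //= (bigD1 w0) /nbhd ?inE //=.
have h1 : 0 <= \sum_(i in [set w | e u w] | i != w0) p S u * (d i * (a S u - a S i)) ^+ 2.
  by apply: sumr_ge0 => w _; rewrite mulr_ge0 ?p_ge0 ?sqr_ge0.
have h2 : 0 <= \sum_(i | i != u) \sum_(w in [set w | e i w]) p S i * (d w * (a S i - a S w)) ^+ 2.
  by apply: sumr_ge0 => v _; apply: sumr_ge0 => w _; rewrite mulr_ge0 ?p_ge0 ?sqr_ge0.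
move: h1 h2; rewrite /a Su eqxx (negbTE Sw) /= subr0 !mulr1; lra.
Qed.

Lemma drift_app (f_ge1 : forall i, 1 <= f i) (e_conn : forall u v : V, connect e u v)
  (v0 : V) (D : state V T -> R) (hD : is_distribution D)
  (Psi : state V T -> R) (M del : R) :
  (forall S, 0 <= Psi S <= M) -> 0 <= M -> 0 < del ->
  (forall S, ~~ absorbed alpha S -> Psi S + del <= \sum_S' moran_trans R e f S S' * Psi S') ->
  forall N, \sum_(t < N) prob_A_gt e f D alpha t <= M / del.
Proof.
move=> Pb M0 d0 Pd N.
case: hD => D0 D1.
apply: (@drift R (state V T) (moran_trans R e f) (absorbed alpha) (killed e f D alpha) Psi M del)
  => //.
- move=> S S'; apply: sumr_ge0 => v _; apply: sumr_ge0 => w _.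
  apply: mulr_ge0; last by rewrite ler0n.
  exact: (p_ge0 f_ge1 S v (F_gt0 f_ge1 v0 S)).
- move=> S nS; have dpos := @nonabs_deg V T e alpha S e_conn nS.
  rewrite (_ : \sum_S' _ = \sum_S' moran_trans R e f S S' * 1); last first.
    by apply: eq_bigr => S' _; rewrite mulr1.
  rewrite (trans_expand S (fun _ => 1)) -[X in _ <= X](sum_p f_ge1 v0 S dpos).
  by rewrite le_eqVlt; apply/orP; left; apply/eqP; apply: eq_bigr => v _; apply: eq_bigr => w _; rewrite mulr1.
- by move=> S /=; rewrite mulr_ge0 ?ler0n.
- rewrite -D1.
  by apply: ler_sum => S _ /=; case: (absorbed alpha S); rewrite /= ?mulr0 ?mulr1.
- by move=> S /= ->; rewrite mulr0.
Qed.

Lemma d_lb v : (0 < deg v)%N -> (#|V|%:R)^-1 <= d v.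
Proof.
move=> dv; have nV : (0 < #|V|)%N by apply/card_gt0P; exists v.
by rewrite /d lef_pV2 ?posrE ?ltr0n // ler_nat max_card.
Qed.

Lemma F_le (amax : forall j, f j <= f alpha) S : F S <= #|V|%:R * fr alpha.
Proof.
rewrite /F /total_fitness -sum1_card natr_sum mulr_suml; apply: ler_sum => u _.
by rewrite mul1r /fr ler_rat.
Qed.

Lemma fstar_lt (f_ge1 : forall i, 1 <= f i) (Ha : alpha \in tauplus f) : fstar f < f alpha.
Proof.
have amax : forall j, f j <= f alpha by move: Ha; rewrite inE => /forallP.
rewrite /fstar; apply: bigmax_lt; first exact: lt_le_trans ltr01 (f_ge1 alpha).
move=> i; rewrite !inE negb_forall => /existsP[k]; rewrite -ltNge => lt.
exact: lt_le_trans lt (amax k).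
Qed.

Lemma le_fstar j : j \notin tauplus f -> f j <= fstar f.
Proof.
move=> nj; rewrite /fstar; apply: le_bigmax_cond.
by rewrite inE.
Qed.

Lemma caseA (e_sym : symmetric e) (e_conn : forall u v : V, connect e u v)
  (f_ge1 : forall i, 1 <= f i) (Ha : alpha \in tauplus f) (one : #|tauplus f| = 1%N)
  (D : state V T -> R) (hD : is_distribution D) (Sx : state V T) (nSx : ~~ absorbed alpha Sx) N :
  \sum_(t < N) prob_A_gt e f D alpha t <=
  #|V|%:R / ((#|V|%:R)^-1 * (#|V|%:R)^-1 * (#|V|%:R * fr alpha)^-1 * (fr alpha - ratr (fstar f))).
Proof.
have amax : forall j, f j <= f alpha by move: Ha; rewrite inE => /forallP.
have [[v0 _] _] := @nonabs V T alpha Sx nSx.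
have n0 : 0 < #|V|%:R :> R by rewrite ltr0n; apply/card_gt0P; exists v0.
have fa0 : 0 < fr alpha by apply: lt_le_trans ltr01 (fr_ge1 f_ge1 _).
have fs0 : 0 < fr alpha - ratr (fstar f) by rewrite subr_gt0 /fr ltr_rat (fstar_lt f_ge1 Ha).
have only : forall j, j \in tauplus f -> j = alpha.
  move/eqP: one => /cards1P[x hx] j; rewrite hx inE => /eqP ->.
  by move: Ha; rewrite hx inE => /eqP ->.
apply: (drift_app f_ge1 e_conn v0 D hD phi).
- by move=> S; rewrite phi_ge0 phi_le.
- exact: ler0n.
- by rewrite !mulr_gt0 // invr_gt0 // mulr_gt0.
move=> S nS; have dpos := @nonabs_deg V T e alpha S e_conn nS.
rewrite (drift_phi f_ge1 v0 S dpos) lerD2l.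
have [u [w0 /and3P[euw /eqP Su Sw]]] := @nonabs_boundary V T e alpha S e_conn nS.
have F0 := F_gt0 f_ge1 v0 S.
apply: le_trans (L_lb e_sym amax _ _ _ F0 euw Su Sw).
have nw : S w0 \notin tauplus f by apply/negP => /only /eqP; rewrite (negbTE Sw).
have h1 : fr alpha - ratr (fstar f) <= fr alpha - fr (S w0).
  by rewrite lerD2l lerN2 /fr ler_rat le_fstar.
have h2 : (#|V|%:R * fr alpha)^-1 <= (F S)^-1.
  rewrite lef_pV2 ?posrE ?(mulr_gt0 n0 fa0) //; exact: (F_le amax S).
have ni : 0 <= (#|V|%:R)^-1 :> R by rewrite invr_ge0 ltW.
have nfi : 0 <= (#|V|%:R * fr alpha)^-1 by rewrite invr_ge0 ltW // mulr_gt0.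
apply: ler_pM; [by rewrite !mulr_ge0 | exact: ltW | | exact: h1].
apply: ler_pM; [by rewrite mulr_ge0 | exact: nfi | | exact: h2].
by apply: ler_pM; [exact: ni | exact: ni | exact: d_lb (dpos _) | exact: d_lb (dpos _)].
Qed.

Lemma caseB (e_sym : symmetric e) (e_conn : forall u v : V, connect e u v)
  (f_ge1 : forall i, 1 <= f i) (Ha : alpha \in tauplus f)
  (D : state V T -> R) (hD : is_distribution D) (Sx : state V T) (nSx : ~~ absorbed alpha Sx) N :
  \sum_(t < N) prob_A_gt e f D alpha t <=
  #|V|%:R ^+ 2 / ((#|V|%:R)^-1 * (#|V|%:R)^-1 * (#|V|%:R)^-1 ^+ 2).
Proof.
have amax : forall j, f j <= f alpha by move: Ha; rewrite inE => /forallP.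
have [[v0 _] _] := @nonabs V T alpha Sx nSx.
have n0 : 0 < #|V|%:R :> R by rewrite ltr0n; apply/card_gt0P; exists v0.
have fa0 : 0 < fr alpha by apply: lt_le_trans ltr01 (fr_ge1 f_ge1 _).
apply: (drift_app f_ge1 e_conn v0 D hD (fun S => phi S ^+ 2)).
- move=> S; rewrite sqr_ge0 /= ler_sqr ?nnegrE ?phi_ge0 ?phi_le //.
- by rewrite sqr_ge0.
- by rewrite !mulr_gt0 // ?exprn_gt0 // invr_gt0.
move=> S nS; have dpos := @nonabs_deg V T e alpha S e_conn nS.
rewrite (drift_phi2 f_ge1 v0 S dpos) lerD2l.
have [u [w0 /and3P[euw /eqP Su Sw]]] := @nonabs_boundary V T e alpha S e_conn nS.
have F0 := F_gt0 f_ge1 v0 S.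
have hL : 0 <= 2 * phi S * L S by rewrite !mulr_ge0 ?phi_ge0 ?L_ge0.
suff hQ : (#|V|%:R)^-1 * (#|V|%:R)^-1 * (#|V|%:R)^-1 ^+ 2 <=
  \sum_v \sum_(w in nbhd e v) p S v * (d w * (a S v - a S w)) ^+ 2.
  by move: hL hQ; lra.
apply: le_trans (Q_lb f_ge1 _ _ _ F0 euw Su Sw).
have h1 : (#|V|%:R)^-1 <= fr (S u) / F S.
  rewrite Su ler_pdivlMr // mulrC ler_pdivrMr // mulrC.
  exact: (F_le amax S).
have ni : 0 <= (#|V|%:R)^-1 :> R by rewrite invr_ge0 ltW.
apply: ler_pM; [by rewrite mulr_ge0 | by rewrite exprn_ge0 | | ].
  by apply: ler_pM; [exact: ni | exact: ni | exact: h1 | exact: d_lb (dpos _)].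
by rewrite lerXn2r ?nnegrE ?d_ge0 ?d_lb ?dpos.
Qed.

End M.

Lemma killed_ge0 (R : realType) (V T : finType) (e : rel V) (f : T -> rat)
  (f_ge1 : forall i, 1 <= f i) (v0 : V) (D : state V T -> R) (j : T) :
  (forall S, 0 <= D S) -> forall t S, 0 <= killed e f D j t S.
Proof.
move=> D0; elim=> [|t IH] S /=; first by rewrite mulr_ge0 ?ler0n.
apply: sumr_ge0 => S0 _; rewrite !mulr_ge0 ?ler0n //.
apply: sumr_ge0 => v _; apply: sumr_ge0 => w _; rewrite mulr_ge0 ?ler0n //.
apply: p_ge0 => //; exact: (F_gt0 _ _ _ _ f_ge1 v0).
Qed.

Theorem corollary20 (R : realType) (V T : finType) (e : rel V)
  (e_sym : symmetric e) (e_irr : irreflexive e)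
  (e_conn : forall u v : V, connect e u v)
  (f : T -> rat) (f_ge1 : forall i, 1 <= f i)
  (D : state V T -> R)
  (hT : (1 < #|T|)%N)
  (hfstar : tauplus f != [set: T])
  (hD : is_distribution D) (hDcal : in_Dcal D) :
  forall alpha, alpha \in tauplus f ->
    (expected_A e f D alpha <=
      (ratr ((#|tauplus f|%:R - 1) * (#|V|%:R) ^+ 6
             + f alpha / (f alpha - fstar f) * (#|V|%:R + 1) * (#|V|%:R) ^+ 3
             : rat) : R)%:E)%E.
Proof.
move=> alpha Ha.
set fa : R := ratr (f alpha).
set fs : R := ratr (fstar f).
set n : R := #|V|%:R.
set k : R := #|tauplus f|%:R.
have fa0 : 0 < fa by rewrite /fa -(rmorph0 (ratr : rat -> R)) ltr_rat; exact: lt_le_trans ltr01 (f_ge1 alpha).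
have fs0 : 0 < fa - fs by rewrite subr_gt0 /fa /fs ltr_rat (fstar_lt _ _ _ f_ge1 Ha).
have q0 : 0 < fa / (fa - fs) by rewrite divr_gt0.
have k1 : 1 <= k.
  by rewrite /k ler1n; apply/card_gt0P; exists alpha.
have Beq : ratr ((#|tauplus f|%:R - 1) * (#|V|%:R) ^+ 6
             + f alpha / (f alpha - fstar f) * (#|V|%:R + 1) * (#|V|%:R) ^+ 3 : rat)
           = (k - 1) * n ^+ 6 + fa / (fa - fs) * (n + 1) * n ^+ 3 :> R.
  by rewrite !(rmorphXn, rmorphB, rmorphD, fmorph_div, fmorphV, rmorphN, rmorphM, rmorph_nat, rmorph1).
rewrite Beq.
have n0' : 0 <= n by rewrite /n ler0n.
have np : 0 <= n + 1 by lra.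
have h3 : 0 <= fa / (fa - fs) * (n + 1) * n ^+ 3.
  by apply: mulr_ge0; [apply: mulr_ge0; [exact: ltW q0 | exact: np] | exact: exprn_ge0].
have B0 : 0 <= (k - 1) * n ^+ 6 + fa / (fa - fs) * (n + 1) * n ^+ 3.
  have : 0 <= (k - 1) * n ^+ 6 by rewrite mulr_ge0 ?exprn_ge0 ?subr_ge0.
  lra.
case: (boolP [exists S : state V T, ~~ absorbed alpha S]); last first.
  rewrite negb_exists => /forallP allabs.
  have k0 t S : killed e f D alpha t S = 0.
    case: t => [|t] /=; rewrite (negbTE (allabs S)) /=; first by rewrite mulr0n mulr0.
    by apply: big1 => S0 _; rewrite mulr0n mulr0.
  apply: series_le => [t|N]; rewrite /prob_A_gt.
    by rewrite big1.
  by rewrite big1 // => t _; apply: big1.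
case/existsP => Sx nSx.
have [[v0 _] _] := @nonabs V T alpha Sx nSx.
have n0 : 0 < n by rewrite /n ltr0n; apply/card_gt0P; exists v0.
case: hD => [D0 D1].
apply: series_le => [t|N].
  by apply: sumr_ge0 => S _; exact: (killed_ge0 R V T e f f_ge1 v0 D alpha D0).
case: (eqVneq #|tauplus f| 1%N) => [one|none].
  apply: le_trans (@caseA R V T e f alpha e_sym e_conn f_ge1 Ha one D (conj D0 D1) Sx nSx N) _.
  rewrite -/fa -/fs -/n.
  have -> : n / (n^-1 / n / (n * fa) * (fa - fs)) = fa / (fa - fs) * (n * n ^+ 3).
    by field; rewrite ?gt_eqF.
  rewrite /k one subrr mul0r add0r -(mulrA _ (n + 1)); apply: ler_wpM2l; first exact: ltW q0.
  by apply: ler_wpM2r; [exact: exprn_ge0 | lra].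
apply: le_trans (@caseB R V T e f alpha e_sym e_conn f_ge1 Ha D (conj D0 D1) Sx nSx N) _.
rewrite -/n.
have -> : n ^+ 2 / (n^-1 / n * n^-1 ^+ 2) = n ^+ 6.
  by field; rewrite ?gt_eqF.
have k2 : 1 <= k - 1.
  rewrite lerBrDr /k (_ : 1 + 1 = 2%:R) // ler_nat.
  have : (0 < #|tauplus f|)%N by apply/card_gt0P; exists alpha.
  by move: none; case: #|tauplus f| => [|[|m]].
have h6 : n ^+ 6 <= (k - 1) * n ^+ 6 by rewrite ler_peMl ?exprn_ge0.
lra.
Qed.
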